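(* For any graph $G=([n],E)$ with at least one edge, $\kappa(G)=\sup_w \kappa(G,w)$, where the supremum ranges over all vectors $w\in\mathbb{R}^E$ such that $w^Tx\le 1$ is a facet-defining inequality of $\mathrm{CUT}(G)$, taken up to switching (i.e., it suffices to take one representative from each switching class of facet-defining inequalities).
   Context: For a graph $G=([n],E)$ and $w\in\mathbb{R}^E$, let $\mathrm{ip}(G,w)=\max_{x\in\{\pm1\}^n}\sum_{ij\in E}w_{ij}x_ix_j$ and $\mathrm{sdp}(G,w)=\max\sum_{ij\in E}w_{ij}u_i^Tu_j$, the maximum over unit vectors $u_1,\dots,u_n\in\mathbb{R}^n$; $\kappa(G,w)=\mathrm{sdp}(G,w)/\mathrm{ip}(G,w)$ and $\kappa(G)=\sup_{w\in\mathbb{R}^E}\kappa(G,w)$. $\mathrm{CUT}(G)$ is the projection onto the edge coordinates $\mathbb{R}^E$ of $\mathrm{conv}\{xx^T : x\in\{\pm1\}^n\}$; the origin lies in its interior, so its facets can be written as $w^Tx\le 1$. The switching of $w\in\mathbb{R}^E$ by $S\subseteq[n]$ is the vector $w^{(S)}$ with $w^{(S)}_{ij}=-w_{ij}$ if exactly one of $i,j$ lies in $S$, and $w^{(S)}_{ij}=w_{ij}$ otherwise. *)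

(* Defs.v *)
From HB Require Import structures.
From mathcomp Require Import all_boot all_order all_algebra.
From mathcomp Require Import all_classical all_reals ereal.
Set Implicit Arguments. Unset Strict Implicit. Unset Printing Implicit Defensive.
Import Order.TTheory GRing.Theory Num.Theory.
Local Open Scope ring_scope.
Local Open Scope classical_set_scope.

Section CutDefs.
Variables (R : realType) (n : nat) (E : {set 'I_n * 'I_n}).

(* Edges: ordered pairs (i,j) with i < j belonging to E (simple graph on [n]).
   The index type of the coordinate space R^E. *)
Definition edge := {e : 'I_n * 'I_n | e \in E}.

Definition pm1 (x : 'I_n -> R) := forall i, x i = 1 \/ x i = -1.

Definition unitvecs (u : 'I_n -> 'I_n -> R) :=
  forall i, \sum_(k < n) u i k ^+ 2 = 1.

Definition dotv (a b : 'I_n -> R) := \sum_(k < n) a k * b k.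

Definition ip (w : edge -> R) : R :=
  sup [set \sum_(e : edge) w e * (x (val e).1 * x (val e).2) | x in pm1].

Definition sdp (w : edge -> R) : R :=
  sup [set \sum_(e : edge) w e * dotv (u (val e).1) (u (val e).2) | u in unitvecs].

Definition kappa (w : edge -> R) : R := sdp w / ip w.

Definition kappaG : \bar R := ereal_sup [set (kappa w)%:E | w in [set: edge -> R]].

(* the vertex x x^T projected on the edge coordinates *)
Definition cutvec (x : 'I_n -> R) : edge -> R :=
  fun e => x (val e).1 * x (val e).2.

Definition CUT : set (edge -> R) :=
  [set y | exists (k : nat) (lam : 'I_k -> R) (xs : 'I_k -> 'I_n -> R),
      [/\ forall i, 0 <= lam i, \sum_(i < k) lam i = 1, forall i, pm1 (xs i)
        & forall e, y e = \sum_(i < k) lam i * cutvec (xs i) e]].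

Definition linf (w y : edge -> R) : R := \sum_(e : edge) w e * y e.

Definition aff_indep (k : nat) (p : 'I_k -> edge -> R) :=
  forall c : 'I_k -> R, \sum_(i < k) c i = 0 ->
    (forall e, \sum_(i < k) c i * p i e = 0) -> forall i, c i = 0.

(* w^T y <= 1 is facet-defining for CUT(G): it is valid, and the face
   {y in CUT(G) | w^T y = 1} has dimension |E| - 1 (it contains |E| affinely
   independent points; it cannot contain more since it lies in a hyperplane). *)
Definition facet (w : edge -> R) :=
  (forall y, CUT y -> linf w y <= 1) /\
  exists p : 'I_#|{: edge}| -> edge -> R,
    (forall i, CUT (p i) /\ linf w (p i) = 1) /\ aff_indep p.

Definition switch (S : {set 'I_n}) (w : edge -> R) : edge -> R :=
  fun e => if ((val e).1 \in S) != ((val e).2 \in S) then - w e else w e.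

End CutDefs.

(* Main.v *)
Require Import Defs.
From mathcomp Require Import all_boot all_order all_algebra.
From mathcomp Require Import all_classical all_reals ereal.
From mathcomp Require Import zify ring lra.
Import Order.TTheory GRing.Theory Num.Theory.
Set Implicit Arguments. Unset Strict Implicit. Unset Printing Implicit Defensive.
Local Open Scope ring_scope.

Section Abs.
Variables (R : realType) (V : finType) (d : nat) (pv : V -> 'I_d -> R).
Hypothesis Hsum0 : forall j, \sum_v pv v j = 0.
Hypothesis Hspan : forall z : 'I_d -> R, (forall v, \sum_j pv v j * z j = 0) -> forall j, z j = 0.
Variable F : ('I_d -> R) -> R.
Hypothesis Fconv : forall (a b : 'I_d -> R) (l : R), 0 <= l -> l <= 1 ->
  F (fun j => l * a j + (1 - l) * b j) <= l * F a + (1 - l) * F b.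

Definition dt v (c : 'I_d -> R) := \sum_j pv v j * c j.
Definition valid c := forall v, dt v c <= 1.
Definition Tm c : 'M[R]_(#|V|, d) :=
  \matrix_(k, j) if dt (enum_val k) c == 1 then pv (enum_val k) j else 0.
Definition good f := valid f /\ exists M : 'M[R]_d, row_free M /\
  forall i, exists v, dt v f = 1 /\ forall j, M i j = pv v j.
Definition nt c := [set v | dt v c != 1].

Lemma dt_sum0 z : \sum_v dt v z = 0.
Proof.
rewrite /dt exchange_big /= big1 // => j _.
by rewrite -mulr_suml Hsum0 mul0r.
Qed.

Lemma pos_exists z : (exists v, dt v z != 0) -> exists v, 0 < dt v z.
Proof.
move=> [v0 Hv0]; apply/not_existsP => H.
have Hle : forall v, 0 <= - dt v z by move=> v; rewrite oppr_ge0 leNgt; apply/negP => /(H v).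
have : \sum_v - dt v z = 0 by rewrite sumrN dt_sum0 oppr0.
move/psumr_eq0P => /(_ (fun v _ => Hle v)) /(_ v0 isT) /eqP.
by rewrite oppr_eq0 (negbTE Hv0).
Qed.

Lemma dt_lin v c z t : dt v (fun j => c j + t * z j) = dt v c + t * dt v z.
Proof.
rewrite /dt mulr_sumr -big_split /=; apply: eq_bigr => j _.
by rewrite mulrDr mulrCA.
Qed.

Lemma move_step c z v0 : valid c -> (forall v, dt v c = 1 -> dt v z = 0) ->
  0 < dt v0 z -> exists t, 0 < t /\ valid (fun j => c j + t * z j) /\
  (forall v, dt v c = 1 -> dt v (fun j => c j + t * z j) = 1) /\
  exists v1, dt v1 c != 1 /\ dt v1 (fun j => c j + t * z j) = 1.
Proof.
move=> Hc Hz Hv0.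
pose P := fun v => 0 < dt v z.
pose G := fun v => (1 - dt v c) / dt v z.
have hnt : forall v, P v -> dt v c < 1.
  move=> v Pv; rewrite lt_neqAle Hc andbT; apply/eqP => /Hz Hz0.
  by move: Pv; rewrite /P Hz0 ltxx.
case: (@arg_minP _ _ V v0 P G Hv0) => v1 Pv1 Hmin.
exists (G v1); split; [|split; [|split]].
- by rewrite /G divr_gt0 // subr_gt0 hnt.
- move=> v; rewrite dt_lin.
  case: (ltP 0 (dt v z)) => Pv.
  + have := Hmin v Pv; rewrite /G => Hm.
    rewrite -lerBrDl; apply: le_trans (_ : (1 - dt v c) / dt v z * dt v z <= _).
    * by rewrite ler_wpM2r // ltW.
    * by rewrite divfK // gt_eqF.
  + apply: le_trans (Hc v); rewrite gerDl mulr_ge0_le0 //.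
    by rewrite /G ltW // divr_gt0 // subr_gt0 hnt.
- by move=> v Hv; rewrite dt_lin Hv (Hz v Hv) mulr0 addr0.
- exists v1; split; first by rewrite lt_eqF // hnt.
  by rewrite dt_lin /G divfK ?gt_eqF // addrC subrK.
Qed.


Lemma dt_opp v z : dt v (fun j => - z j) = - dt v z.
Proof. by rewrite /dt -sumrN; apply: eq_bigr => j _; rewrite mulrN. Qed.

Lemma step c : valid c ->
  (forall c', valid c' -> (#|nt c'| < #|nt c|)%N -> exists f, good f /\ F c' <= F f) ->
  exists f, good f /\ F c <= F f.
Proof.
move=> Hc IH.
have [Hf|Hnf] := boolP (row_full (Tm c)).
  exists c; split=> //; split=> //.
  exists (rowsub (fullrankfun Hf) (Tm c)); split; first exact: fullrowsub_free.
  move=> i; exists (enum_val (fullrankfun Hf i)).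
  have [Ht|Hnt] := eqVneq (dt (enum_val (fullrankfun Hf i)) c) 1.
    by split=> // j; rewrite !mxE Ht eqxx.
  exfalso; have := fullrowsub_free Hf; move/row_free_inj.
  move=> /(_ 1%N (delta_mx 0 i) 0).
  have : (delta_mx 0 i : 'M[R]_(1, d)) *m rowsub (fullrankfun Hf) (Tm c) = (0 : 'M[R]_(1,d)) *m rowsub (fullrankfun Hf) (Tm c).
    rewrite mul0mx -rowE; apply/rowP => j; rewrite !mxE (negbTE Hnt) //.
  move=> H /(_ H) /matrixP /(_ 0 i); rewrite !mxE !eqxx /=.
  by move/eqP; rewrite oner_eq0.
set K := kermx (Tm c)^T.
have HK0 : K != 0.
  rewrite -mxrank_eq0 mxrank_ker mxrank_tr; move: Hnf; rewrite /row_full.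
  have := rank_leq_col (Tm c); rewrite -subn_eq0; lia.
have [i0 [j0 Hij]] : exists i j, K i j != 0.
  apply: contrapT => H; move/eqP: HK0; apply; apply/matrixP => i j; rewrite [RHS]mxE.
  apply/eqP; apply: contrapT => Hn; apply: H; exists i, j; exact/negP.
pose z := fun j => K i0 j.
have Hz : forall v, dt v c = 1 -> dt v z = 0.
  move=> v Hv; have := mulmx_ker (Tm c)^T; move/matrixP => /(_ i0 (enum_rank v)).
  rewrite mxE [RHS]mxE => <-; rewrite /dt; apply: eq_bigr => j _.
  by rewrite [(_^T) _ _]mxE /Tm [(\matrix_(_, _) _) _ _]mxE enum_rankK Hv eqxx mulrC.
have Hzn : forall v, dt v c = 1 -> dt v (fun j => - z j) = 0.
  by move=> v Hv; rewrite dt_opp Hz ?oppr0.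
have Hex : exists v, dt v z != 0.
  apply/not_existsP => H; move/eqP: Hij; apply; apply: Hspan => v.
  by have := H v; move/negP; rewrite negbK => /eqP; rewrite /dt; under eq_bigr do rewrite mulrC.
have [vp Hvp] := pos_exists Hex.
have [vm Hvm] : exists v, 0 < dt v (fun j => - z j).
  apply: pos_exists; case: Hex => v Hv; exists v; by rewrite dt_opp oppr_eq0.
have [t1 [Ht1 [Hc1 [Hti1 [v1 [Hv1 Hv1']]]]]] := move_step Hc Hz Hvp.
have [t2 [Ht2 [Hc2 [Hti2 [v2 [Hv2 Hv2']]]]]] := move_step Hc Hzn Hvm.
have Hcard : forall c', (forall v, dt v c = 1 -> dt v c' = 1) -> (exists v, dt v c != 1 /\ dt v c' = 1) ->
    (#|nt c'| < #|nt c|)%N.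
  move=> c' Ht [v [Hv Hv']]; apply: proper_card; apply/properP; split.
    apply/fintype.subsetP => u; rewrite !inE; apply: contra => /eqP /Ht ->; done.
  by exists v; rewrite !inE ?Hv // Hv' eqxx.
have [f1 [Hf1 HF1]] := IH _ Hc1 (Hcard _ Hti1 (ex_intro _ v1 (conj Hv1 Hv1'))).
have [f2 [Hf2 HF2]] := IH _ Hc2 (Hcard _ Hti2 (ex_intro _ v2 (conj Hv2 Hv2'))).
set l := t2 / (t1 + t2).
have Hs : 0 < t1 + t2 by rewrite addr_gt0.
have Hl0 : 0 <= l by rewrite /l divr_ge0 // ltW.
have Hl1 : l <= 1 by rewrite /l ler_pdivrMr // mul1r lerDr ltW.
have Hceq : c = (fun j => l * (c j + t1 * z j) + (1 - l) * (c j + - t2 * z j)).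
  apply/funext => j; rewrite /l; field; exact: lt0r_neq0.
have HFc := Fconv (fun j => c j + t1 * z j) (fun j => c j + - t2 * z j) Hl0 Hl1.
have Hc2' : (fun j => c j + t2 * - z j) = (fun j => c j + - t2 * z j).
  by apply/funext => j; rewrite mulrN mulNr.
rewrite Hc2' in HF2.
rewrite -Hceq in HFc.
have [Hle|Hle] := leP (F f1) (F f2).
  exists f2; split=> //; apply: (le_trans HFc).
  apply: le_trans (_ : l * F f2 + (1 - l) * F f2 <= _).
    by rewrite lerD // ler_wpM2l // ?subr_ge0 //; apply: le_trans Hle.
  by rewrite -mulrDl addrC subrK mul1r.
exists f1; split=> //; apply: (le_trans HFc).
apply: le_trans (_ : l * F f1 + (1 - l) * F f1 <= _).
  by rewrite lerD // ler_wpM2l // ?subr_ge0 //; apply: le_trans (ltW Hle).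
by rewrite -mulrDl addrC subrK mul1r.
Qed.

Lemma main_abs c : valid c -> exists f, good f /\ F c <= F f.
Proof.
have : forall m c, (#|nt c| < m)%N -> valid c -> exists f, good f /\ F c <= F f.
  elim=> [//|m IHm] c' Hm Hc'; apply: step => // c'' Hc'' Hlt.
  by apply: IHm => //; apply: leq_trans Hlt _.
by move=> H Hc; apply: (H _ c (ltnSn _) Hc).
Qed.

End Abs.

Section Conc.
Variables (R : realType) (n : nat) (E : {set 'I_n * 'I_n}).
Hypothesis HE : forall e, e \in E -> (e.1 < e.2)%N.

Local Notation V := {ffun 'I_n -> bool}.
Local Notation d := #|{: edge E}|.

Definition xs (f : V) (i : 'I_n) : R := if f i then -1 else 1.
Definition pv (f : V) (j : 'I_d) : R := @cutvec R n E (xs f) (enum_val j).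
Definition tog (a : 'I_n) (f : V) : V := [ffun i => if i == a then ~~ f i else f i].

Lemma togK a : involutive (tog a).
Proof.
move=> f; apply/ffunP => i; rewrite !ffunE.
by case: (i == a); rewrite ?negbK.
Qed.

Lemma xs_tog a f i : xs (tog a f) i = if i == a then - xs f i else xs f i.
Proof.
rewrite /xs ffunE; case: (i == a) => //.
by case: (f i) => /=; rewrite ?opprK.
Qed.

Lemma sum_flip a (g : V -> R) : (forall f, g (tog a f) = - g f) -> \sum_f g f = 0.
Proof.
move=> Hg.
have H : \sum_f g f = \sum_f g (tog a f).
  by rewrite (reindex_inj (can_inj (togK a))).
  have : \sum_f g f = - \sum_f g f by rewrite {1}H -sumrN; apply: eq_bigr => f _; rewrite Hg.
move/eqP; rewrite -subr_eq0 opprK -mulr2n mulrn_eq0 /= => /eqP //.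
Qed.

Lemma xs_sq f i : xs f i * xs f i = 1.
Proof. by rewrite /xs; case: (f i); rewrite ?mulrNN mulr1. Qed.

Lemma edge_lt (e : edge E) : ((val e).1 < (val e).2)%N.
Proof. by apply: HE; case: e. Qed.

Lemma Hsum0 j : \sum_f pv f j = 0.
Proof.
set e := enum_val j.
apply: (@sum_flip (val e).1) => f.
have Hne : ((val e).2 == (val e).1) = false.
  by apply/eqP => H; have := edge_lt e; rewrite H ltnn.
by rewrite /pv /cutvec -/e !xs_tog eqxx Hne mulNr.
Qed.

Lemma flip4 (a b a0 b0 : 'I_n) : (a < b)%N -> (a0 < b0)%N -> (a, b) != (a0, b0) ->
  exists c : 'I_n, forall f : V,
   xs (tog c f) a * xs (tog c f) b * (xs (tog c f) a0 * xs (tog c f) b0) =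
   - (xs f a * xs f b * (xs f a0 * xs f b0)).
Proof.
move=> Hab Ha0b0 Hne.
have [Ha|Ha] := boolP ((a == a0) || (a == b0)); last first.
  exists a => f; rewrite !xs_tog eqxx.
  move: Ha; rewrite negb_or => /andP [H1 H2].
  have H3 : (b == a) = false by apply/eqP => H; move: Hab; rewrite H ltnn.
  by rewrite H3 eq_sym (negbTE H1) eq_sym (negbTE H2); ring.
case/orP: Ha => /eqP Ha.
  subst a0; exists b => f; rewrite !xs_tog eqxx.
  have H1 : (a == b) = false by apply/eqP => H; move: Hab; rewrite H ltnn.
  have H2 : (b0 == b) = false by apply/eqP => H; move: Hne; rewrite H eqxx.
  by rewrite H1 H2; ring.
subst b0; exists a0 => f; rewrite !xs_tog eqxx.
have H1 : (a == a0) = false by apply/eqP => H; move: Ha0b0; rewrite H ltnn.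
have H2 : (b == a0) = false.
  by apply/eqP => H; move: (ltn_trans Ha0b0 Hab); rewrite H ltnn.
by rewrite H1 H2; ring.
Qed.

Lemma ortho j j0 : \sum_f pv f j0 * pv f j = if j == j0 then #|{: V}|%:R else 0.
Proof.
have [->|Hne] := eqVneq j j0.
  rewrite -sum1_card natr_sum; apply: eq_bigr => f _.
  by rewrite /pv /cutvec mulrACA !xs_sq mulr1.
set e := enum_val j; set e0 := enum_val j0.
have Hne' : val e != val e0.
  apply: contra Hne => /eqP /val_inj H; apply/eqP; exact: enum_val_inj.
have Hp : ((val e0).1, (val e0).2) != ((val e).1, (val e).2).
  by rewrite -!surjective_pairing eq_sym.
have [c Hc] := @flip4 (val e0).1 (val e0).2 (val e).1 (val e).2 (edge_lt e0) (edge_lt e) Hp.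
by apply: (@sum_flip c) => f; rewrite /pv /cutvec -/e -/e0 Hc.
Qed.

Lemma cardV_neq0 : (#|{: V}|%:R : R) != 0.
Proof.
rewrite pnatr_eq0 -lt0n; apply/card_gt0P; by exists [ffun _ => false].
Qed.

Lemma Hspan (z : 'I_d -> R) : (forall f, \sum_j pv f j * z j = 0) -> forall j, z j = 0.
Proof.
move=> Hz j0.
have : \sum_f pv f j0 * (\sum_j pv f j * z j) = 0.
  by rewrite big1 // => f _; rewrite Hz mulr0.
under eq_bigr do rewrite mulr_sumr.
rewrite exchange_big /=.
have Heq : forall j, \sum_f pv f j0 * (pv f j * z j) = (if j == j0 then #|{: V}|%:R else 0) * z j.
  by move=> j; rewrite -ortho mulr_suml; apply: eq_bigr => f _; rewrite mulrA.
under eq_bigr do rewrite Heq.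
rewrite (bigD1 j0) //= eqxx big1 ?addr0; last first.
  by move=> j /negbTE ->; rewrite mul0r.
by move/eqP; rewrite mulf_eq0 (negbTE cardV_neq0) /= => /eqP.
Qed.


Lemma pm1_abs (x : 'I_n -> R) i : pm1 x -> `|x i| = 1.
Proof. by move=> /(_ i) [] ->; rewrite ?normrN normr1. Qed.

Lemma pm1_1 : pm1 (fun _ : 'I_n => (1 : R)).
Proof. by move=> i; left. Qed.

Lemma ip_has_sup (w : edge E -> R) :
  has_sup [set \sum_(e : edge E) w e * (x (val e).1 * x (val e).2) | x in @pm1 R n].
Proof.
split; first by eexists; exists (fun _ => 1); [exact: pm1_1|reflexivity].
exists (\sum_e `|w e|) => y [x Hx <-]; apply: ler_sum => e _.
by apply: le_trans (ler_norm _) _; rewrite normrM normrM !pm1_abs // !mulr1 lexx.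
Qed.

Lemma ip_ub (w : edge E -> R) x : pm1 x -> linf w (cutvec x) <= ip w.
Proof. by move=> Hx; apply: sup_upper_bound (ip_has_sup w) _ _; exists x. Qed.

Lemma ip_le (w : edge E -> R) M : (forall x, pm1 x -> linf w (cutvec x) <= M) -> ip w <= M.
Proof.
move=> H; apply: ge_sup; first exact: (ip_has_sup w).1.
by move=> y [x Hx <-]; apply: H.
Qed.

Lemma dot_bound (u : 'I_n -> 'I_n -> R) a b : unitvecs u -> `|dotv (u a) (u b)| <= 1.
Proof.
move=> Hu.
have E1 : \sum_k (u a k - u b k) ^+ 2 = 2 - 2 * dotv (u a) (u b).
  rewrite (eq_bigr (fun k => u a k ^+ 2 + u b k ^+ 2 + (-2) * (u a k * u b k))); last first.
    by move=> k _; ring.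
  by rewrite !big_split /= -mulr_sumr !Hu /dotv; ring.
have E2 : \sum_k (u a k + u b k) ^+ 2 = 2 + 2 * dotv (u a) (u b).
  rewrite (eq_bigr (fun k => u a k ^+ 2 + u b k ^+ 2 + 2 * (u a k * u b k))); last first.
    by move=> k _; ring.
  by rewrite !big_split /= -mulr_sumr !Hu /dotv; ring.
have G1 : 0 <= \sum_k (u a k - u b k) ^+ 2 by apply: sumr_ge0 => k _; exact: sqr_ge0.
have G2 : 0 <= \sum_k (u a k + u b k) ^+ 2 by apply: sumr_ge0 => k _; exact: sqr_ge0.
rewrite E1 in G1; rewrite E2 in G2.
rewrite ler_norml; apply/andP; split; lra.
Qed.

Hypothesis Hn : (0 < n)%N.

Definition u1 (x : 'I_n -> R) : 'I_n -> 'I_n -> R :=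
  fun i k => if val k == 0%N then x i else 0.

Lemma u1_dot x a b : dotv (u1 x a) (u1 x b) = x a * x b.
Proof.
rewrite /dotv (bigD1 (Ordinal Hn)) //= big1 ?addr0 /u1 //=.
by move=> k Hk; rewrite ifF ?mul0r //; apply/eqP => H; move: Hk; rewrite -val_eqE /= H eqxx.
Qed.

Lemma u1_unit x : pm1 x -> unitvecs (u1 x).
Proof.
move=> Hx i; rewrite (bigD1 (Ordinal Hn)) //= big1 ?addr0 /u1 //=.
  by case: (Hx i) => ->; rewrite ?sqrrN expr1n.
by move=> k Hk; rewrite ifF ?expr0n //; apply/eqP => H; move: Hk; rewrite -val_eqE /= H eqxx.
Qed.

Lemma sdp_has_sup (w : edge E -> R) :
  has_sup [set \sum_(e : edge E) w e * dotv (u (val e).1) (u (val e).2) | u in @unitvecs R n].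
Proof.
split; first by eexists; exists (u1 (fun _ => 1)); [exact: u1_unit pm1_1|reflexivity].
exists (\sum_e `|w e|) => y [u Hu <-]; apply: ler_sum => e _.
apply: le_trans (ler_norm _) _; rewrite normrM.
by apply: le_trans (ler_wpM2l (normr_ge0 _) (dot_bound _ _ Hu)) _; rewrite mulr1.
Qed.

Lemma sdp_ub (w : edge E -> R) u : unitvecs u ->
  \sum_(e : edge E) w e * dotv (u (val e).1) (u (val e).2) <= sdp w.
Proof. by move=> Hu; apply: sup_upper_bound (sdp_has_sup w) _ _; exists u. Qed.

Lemma sdp_le (w : edge E -> R) M :
  (forall u, unitvecs u -> \sum_(e : edge E) w e * dotv (u (val e).1) (u (val e).2) <= M) ->
  sdp w <= M.
Proof.
move=> H; apply: ge_sup; first exact: (sdp_has_sup w).1.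
by move=> y [u Hu <-]; apply: H.
Qed.

Lemma sdp_ge_cut (w : edge E -> R) x : pm1 x -> linf w (cutvec x) <= sdp w.
Proof.
move=> Hx; apply: le_trans (sdp_ub w (u1_unit Hx)); rewrite le_eqVlt; apply/orP; left.
by apply/eqP; apply: eq_bigr => e _; rewrite u1_dot.
Qed.


Definition rv (w : edge E -> R) : 'I_d -> R := fun j => w (enum_val j).

Lemma dt_linf f (w : edge E -> R) : dt pv f (rv w) = linf w (cutvec (xs f)).
Proof.
rewrite /dt /linf /rv /pv.
rewrite [RHS](reindex (@enum_val _ (mem {: edge E}))) /=; last first.
  by exists (@enum_rank _) => e _; [exact: enum_valK | exact: enum_rankK].
by apply: eq_bigr => j _; rewrite mulrC.
Qed.

Definition fx (x : 'I_n -> R) : V := [ffun i => x i == -1].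

Lemma pm1_xs x : pm1 x -> xs (fx x) = x.
Proof.
move=> Hx; apply/funext => i; rewrite /xs /fx ffunE.
case: (Hx i) => ->; rewrite ?eqxx //.
by rewrite ifF //; apply/eqP => H; lra.
Qed.

Lemma cut_val x (w : edge E -> R) : pm1 x -> linf w (cutvec x) = dt pv (fx x) (rv w).
Proof. by move=> Hx; rewrite dt_linf pm1_xs. Qed.

Lemma xs_pm1 f : pm1 (xs f).
Proof. by move=> i; rewrite /xs; case: (f i); [right|left]. Qed.

Definition Fs (c : 'I_d -> R) := sdp (fun e : edge E => c (enum_rank e)).

Lemma Fconv (a b : 'I_d -> R) (l : R) : 0 <= l -> l <= 1 ->
  Fs (fun j => l * a j + (1 - l) * b j) <= l * Fs a + (1 - l) * Fs b.
Proof.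
move=> Hl0 Hl1; apply: sdp_le => u Hu.
set D := fun e : edge E => dotv (u (val e).1) (u (val e).2).
rewrite (eq_bigr (fun e => l * (a (enum_rank e) * D e) + (1 - l) * (b (enum_rank e) * D e))); last first.
  by move=> e _; rewrite /D; ring.
rewrite big_split /= -!mulr_sumr; apply: lerD.
  by apply: ler_wpM2l => //; apply: (sdp_ub (fun e => a (enum_rank e)) Hu).
by apply: ler_wpM2l; [rewrite subr_ge0 | apply: (sdp_ub (fun e => b (enum_rank e)) Hu)].
Qed.

Lemma sdp_scale (w : edge E -> R) t : 0 < t -> sdp w <= t * sdp (fun e => w e / t).
Proof.
move=> Ht; apply: sdp_le => u Hu.
have -> : \sum_(e : edge E) w e * dotv (u (val e).1) (u (val e).2) =
   t * \sum_(e : edge E) (w e / t) * dotv (u (val e).1) (u (val e).2).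
  rewrite mulr_sumr; apply: eq_bigr => e _; field; exact: lt0r_neq0.
by apply: ler_wpM2l; [exact: ltW | apply: (sdp_ub (fun e => w e / t) Hu)].
Qed.

Definition sgn (S : {set 'I_n}) (i : 'I_n) : R := if i \in S then -1 else 1.

Lemma sgn_sq S i : sgn S i * sgn S i = 1.
Proof. by rewrite /sgn; case: (i \in S); rewrite ?mulrNN mulr1. Qed.

Lemma switch_sgn S (w : edge E -> R) e :
  switch S w e = sgn S (val e).1 * sgn S (val e).2 * w e.
Proof.
rewrite /switch /sgn; case: ((val e).1 \in S); case: ((val e).2 \in S) => /=; ring.
Qed.

Lemma switchK S (w : edge E -> R) : switch S (switch S w) = w.
Proof. by apply: boolp.funext => e; rewrite /switch /=; case: (_ != _); rewrite ?opprK. Qed.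

Lemma ip_switch_le S (w : edge E -> R) : ip w <= ip (switch S w).
Proof.
apply: ip_le => x Hx.
have Hx' : pm1 (fun i => sgn S i * x i).
  by move=> i; rewrite /sgn; case: (i \in S); case: (Hx i) => ->; rewrite ?mulrNN ?mulr1 ?mulN1r ?mul1r; auto.
apply: le_trans (ip_ub (switch S w) Hx'); rewrite le_eqVlt; apply/orP; left; apply/eqP.
apply: eq_bigr => e _; rewrite switch_sgn /cutvec.
set a := (val e).1; set b := (val e).2.
transitivity ((sgn S a * sgn S a) * (sgn S b * sgn S b) * (w e * (x a * x b))).
  by rewrite !sgn_sq !mul1r.
ring.
Qed.

Lemma sdp_switch_le S (w : edge E -> R) : sdp w <= sdp (switch S w).
Proof.
apply: sdp_le => u Hu.
have Hu' : unitvecs (fun i k => sgn S i * u i k).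
  move=> i; rewrite -(Hu i); apply: eq_bigr => k _.
  by rewrite exprMn /sgn; case: (i \in S); rewrite ?sqrrN expr1n mul1r.
apply: le_trans (sdp_ub (switch S w) Hu'); rewrite le_eqVlt; apply/orP; left; apply/eqP.
apply: eq_bigr => e _; rewrite switch_sgn.
set a := (val e).1; set b := (val e).2.
have -> : dotv (fun k => sgn S a * u a k) (fun k => sgn S b * u b k) =
    sgn S a * sgn S b * dotv (u a) (u b).
  by rewrite /dotv mulr_sumr; apply: eq_bigr => k _; ring.
transitivity ((sgn S a * sgn S a) * (sgn S b * sgn S b) * (w e * dotv (u a) (u b))).
  by rewrite !sgn_sq !mul1r.
ring.
Qed.

Lemma kappa_switch S (w : edge E -> R) : kappa (switch S w) = kappa w.
Proof.
have Hip : ip (switch S w) = ip w.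
  by apply/le_anti; rewrite ip_switch_le -{2}(switchK S w) ip_switch_le.
have Hsdp : sdp (switch S w) = sdp w.
  by apply/le_anti; rewrite sdp_switch_le -{2}(switchK S w) sdp_switch_le.
by rewrite /kappa Hip Hsdp.
Qed.


Lemma ip_ge0 (w : edge E -> R) : 0 <= ip w.
Proof.
have [f Hf] : exists f, 0 <= dt pv f (rv w).
  case: (boolp.pselect (exists f, dt pv f (rv w) != 0)) => [H|H].
    by have [f Hf] := pos_exists Hsum0 H; exists f; exact: ltW.
  exists [ffun _ => false].
  case: (eqVneq (dt pv [ffun _ => false] (rv w)) 0) => [->//|Hne].
  by exfalso; apply: H; eexists; exact: Hne.
by apply: le_trans Hf _; rewrite dt_linf; apply: ip_ub; exact: xs_pm1.
Qed.

Hypothesis Hd : (0 < d)%N.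

Lemma good_facet f : good pv f ->
  facet (fun e : edge E => f (enum_rank e)) /\ ip (fun e : edge E => f (enum_rank e)) = 1.
Proof.
move=> [Hv [M [HM Hrows]]].
set g := fun e : edge E => f (enum_rank e).
have Hrv : rv g = f by apply: boolp.funext => j; rewrite /rv /g enum_valK.
have Hcut : forall x, pm1 x -> linf g (cutvec x) <= 1.
  by move=> x Hx; rewrite cut_val // Hrv; apply: Hv.
have Hp : forall i, exists v, dt pv v f = 1 /\
    (fun e : edge E => M i (enum_rank e)) = cutvec (xs v).
  move=> i; have [v [Hv1 Hv2]] := Hrows i; exists v; split=> //.
  by apply: boolp.funext => e; rewrite Hv2 /pv enum_rankK.
split; last first.
  apply/le_anti; rewrite ip_le //=.
  have [v [Hv1 Hv2]] := Hp (Ordinal Hd).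
  by rewrite -Hv1 -Hrv dt_linf; apply: ip_ub; exact: xs_pm1.
split.
  move=> y [k [lam [xs0 [H0 H1 H2 H3]]]].
  have -> : linf g y = \sum_(i < k) lam i * linf g (cutvec (xs0 i)).
    rewrite /linf; under eq_bigr do rewrite H3 mulr_sumr.
    rewrite exchange_big /=; apply: eq_bigr => i _; rewrite mulr_sumr.
    by apply: eq_bigr => e _; rewrite mulrCA.
  rewrite -H1; apply: ler_sum => i _; rewrite -{2}(mulr1 (lam i)).
  by apply: ler_wpM2l => //; apply: Hcut.
exists (fun i (e : edge E) => M i (enum_rank e)); split.
  move=> i; have [v [Hv1 Hv2]] := Hp i; rewrite Hv2; split.
    exists 1%N, (fun _ => 1), (fun _ => xs v); split=> //.
    - by rewrite big_ord1.
    - by move=> _; exact: xs_pm1.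
    - by move=> e; rewrite big_ord1 mul1r.
  by rewrite -dt_linf Hrv.
move=> c _ Hc i.
have H0 : (\row_i c i : 'rV[R]_d) *m M = 0 *m M.
  rewrite mul0mx; apply/rowP => j; rewrite !mxE.
  transitivity (\sum_k c k * M k (enum_rank (enum_val j))); last exact: Hc.
  by apply: eq_bigr => k _; rewrite mxE enum_valK.
by have := row_free_inj HM H0; move/rowP => /(_ i); rewrite !mxE.
Qed.

Lemma key (w : edge E -> R) :
  exists g : edge E -> R, facet g /\ ip g = 1 /\ kappa w <= sdp g.
Proof.
have HI := ip_ge0 w.
have [c [Hc Hk]] : exists c, valid pv c /\ (kappa w <= Fs c \/ kappa w <= 0).
  case: (eqVneq (ip w) 0) => [H0|Hne].
    exists (fun _ => 0); split; last by right; rewrite /kappa H0 invr0 mulr0.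
    by move=> v; rewrite /dt big1 ?ler01 // => j _; rewrite mulr0.
  have Hpos : 0 < ip w by rewrite lt_neqAle eq_sym Hne.
  exists (rv (fun e => w e / ip w)); split.
    move=> v; rewrite dt_linf.
    have -> : linf (fun e => w e / ip w) (cutvec (xs v)) = linf w (cutvec (xs v)) / ip w.
      by rewrite /linf mulr_suml; apply: eq_bigr => e _; rewrite mulrAC.
    by rewrite ler_pdivrMr // mul1r; apply: ip_ub; exact: xs_pm1.
  left; rewrite /kappa /Fs.
  have -> : (fun e : edge E => rv (fun e0 => w e0 / ip w) (enum_rank e)) = (fun e => w e / ip w).
    by apply: boolp.funext => e; rewrite /rv enum_rankK.
  by rewrite ler_pdivrMr // mulrC; apply: sdp_scale.
have [f [Hf HF]] := main_abs Hsum0 Hspan Fconv Hc.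
have [Hfac Hip] := good_facet Hf.
exists (fun e : edge E => f (enum_rank e)); split; [|split] => //.
case: Hk => Hk; first exact: le_trans Hk HF.
apply: le_trans Hk _; apply: le_trans (_ : 0 <= ip (fun e : edge E => f (enum_rank e))) _.
  by rewrite Hip ler01.
by apply: ip_le => x Hx; apply: sdp_ge_cut.
Qed.

End Conc.

Local Open Scope classical_set_scope.
Unset Implicit Arguments.

Theorem mainTheorem2 (R : realType) (n : nat) (E : {set 'I_n * 'I_n})
  (HE : forall e, e \in E -> (e.1 < e.2)%N) (Hne : E != finset.set0)
  (Rep : set (edge E -> R))
  (Hfacet : forall w, Rep w -> facet w)
  (Hcover : forall w, facet w -> exists S : {set 'I_n}, Rep (switch S w)) :
  kappaG R E = ereal_sup [set (kappa w)%:E | w in Rep].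
Proof.
case/set0Pn: Hne => e0 He0.
have Hn : (0 < n)%N by have := ltn_ord e0.2; have := HE _ He0; lia.
have Hd : (0 < #|{: edge E}|)%N by apply/card_gt0P; exists (exist _ e0 He0).
apply/eqP; rewrite eq_le; apply/andP; split.
  apply: ge_ereal_sup => _ [w _ <-].
  have [g [Hg [Hip Hk]]] := key HE Hn Hd w.
  have [S HS] := Hcover g Hg.
  apply: le_ereal_sup_tmp; exists (kappa (switch S g))%:E; first by exists (switch S g).
  have Hkg : kappa g = sdp g by rewrite /kappa Hip divr1.
  by rewrite lee_fin (kappa_switch Hn) Hkg.
by apply: ereal_sup_le => _ [w Hw <-]; exists w.
Qed.
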